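(* Let $R$ be a commutative ring in which $2$ is invertible and let $Q$ be a free $R$-module of rank $n$ with a fixed ordered basis. Let $\varphi'$ and $\varphi^*$ be invertible symmetric $n\times n$ matrices defining quadratic forms on $Q$, with $\varphi'=\epsilon^t\varphi^*\epsilon$ for some $\epsilon\in\mathrm{GL}_n(R)$. Let $M=Q\perp\mathbb{H}(R)$, with ordered basis the basis of $Q$ followed by $x,f$, and endow $M$ with the forms of matrices $\varphi'\perp\psi_1$ and $\varphi^*\perp\psi_1$ respectively, where $\psi_1=\begin{pmatrix}0&1\\1&0\end{pmatrix}$. Then, as groups of $(n+2)\times(n+2)$ matrices, $\mathrm{ETransO}(M,\langle\,,\,\rangle_{\varphi'\perp\psi_1})=(\epsilon^{-1}\perp I_2)\,\mathrm{ETransO}(M,\langle\,,\,\rangle_{\varphi^*\perp\psi_1})\,(\epsilon\perp I_2)$.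
   Context: For an invertible symmetric matrix $\varphi$ on $Q$, $\langle a,b\rangle_\varphi=a^t\varphi b$ in coordinates and $q_\varphi(a)=\tfrac12\langle a,a\rangle_\varphi$. $\mathbb{H}(R)=Rx\oplus Rf$ with $\langle x,f\rangle=1$, $\langle x,x\rangle=\langle f,f\rangle=0$. For the form $\varphi\perp\psi_1$ on $M$ and $w\in Q$, writing elements as $(z,ax+bf)$, the elementary orthogonal transvections are $E^w_1(z,ax+bf)=(z-bw,\,(a+\langle z,w\rangle_\varphi-bq_\varphi(w))x+bf)$ and $E^w_2(z,ax+bf)=(z-aw,\,ax+(b+\langle z,w\rangle_\varphi-aq_\varphi(w))f)$; $\mathrm{ETransO}(M,\langle\,,\,\rangle_{\varphi\perp\psi_1})$ is the group generated by all $E^w_1,E^w_2$, $w\in Q$. *)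

(* Defs.v *)
From HB Require Import structures.
From mathcomp Require Import all_boot all_order all_algebra.
Set Implicit Arguments. Unset Strict Implicit. Unset Printing Implicit Defensive.
Import GRing.Theory.
Local Open Scope ring_scope.

Section Transvections.
Variables (R : comUnitRingType) (n : nat).

Definition bform (phi : 'M[R]_n) (a b : 'cV[R]_n) : R := (a^T *m phi *m b) 0 0.

Definition qform (phi : 'M[R]_n) (a : 'cV[R]_n) : R := 2^-1 * bform phi a a.

(* Elements of M = Q _|_ H(R) are column vectors of size n+2: the coordinates
   z of the Q-part, followed by the coordinates a (of x) and b (of f). *)
Definition Mvec (z : 'cV[R]_n) (a b : R) : 'cV[R]_(n + 2) :=
  col_mx z (\col_(i < 2) (if i == ord0 then a else b)).

Definition zpart (v : 'cV[R]_(n + 2)) : 'cV[R]_n := usubmx v.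
Definition xcoord (v : 'cV[R]_(n + 2)) : R := (dsubmx v : 'cV[R]_2) ord0 0.
Definition fcoord (v : 'cV[R]_(n + 2)) : R := (dsubmx v : 'cV[R]_2) ord_max 0.

Definition E1act (phi : 'M[R]_n) (w : 'cV[R]_n) (v : 'cV[R]_(n + 2)) :=
  let z := zpart v in let a := xcoord v in let b := fcoord v in
  Mvec (z - b *: w) (a + bform phi z w - b * qform phi w) b.

Definition E2act (phi : 'M[R]_n) (w : 'cV[R]_n) (v : 'cV[R]_(n + 2)) :=
  let z := zpart v in let a := xcoord v in let b := fcoord v in
  Mvec (z - a *: w) a (b + bform phi z w - a * qform phi w).

Definition mx_of (f : 'cV[R]_(n + 2) -> 'cV[R]_(n + 2)) : 'M[R]_(n + 2) :=
  \matrix_(i, j) (f (delta_mx j 0)) i 0.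

Definition E1 phi w := mx_of (E1act phi w).
Definition E2 phi w := mx_of (E2act phi w).

Definition ETransO_gen (phi : 'M[R]_n) (g : 'M[R]_(n + 2)) : Prop :=
  exists w, g = E1 phi w \/ g = E2 phi w.

Inductive gen_group (S : 'M[R]_(n + 2) -> Prop) : 'M[R]_(n + 2) -> Prop :=
| gen_one : gen_group S 1%:M
| gen_mul g h : S g -> gen_group S h -> gen_group S (g *m h)
| gen_mulV g h : S g -> gen_group S h -> gen_group S (invmx g *m h).

(* ETransO(M, <,>_{phi _|_ psi_1}) *)
Definition ETransO (phi : 'M[R]_n) := gen_group (ETransO_gen phi).

Definition perpI2 (A : 'M[R]_n) : 'M[R]_(n + 2) := block_mx A 0 0 1%:M.

End Transvections.

(* Main.v *)
Require Import Defs.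
From HB Require Import structures.
From mathcomp Require Import all_boot all_order all_algebra.
From mathcomp Require Import ring.
Import GRing.Theory.
Local Open Scope ring_scope.

Section Aux.
Variables (R : comUnitRingType) (n : nat).

Lemma mx_of_lin (f : 'cV[R]_(n + 2) -> 'cV[R]_(n + 2)) :
  (forall k u v, f (k *: u + v) = k *: f u + f v) ->
  forall v, mx_of f *m v = f v.
Proof.
move=> lin.
have fD : forall u v, f (u + v) = f u + f v.
  by move=> u v; have := lin 1 u v; rewrite !scale1r.
have f0 : f 0 = 0.
  by apply: (@addrI _ (f 0)); rewrite -fD !addr0.
have fZ : forall k u, f (k *: u) = k *: f u.
  by move=> k u; rewrite -[k *: u]addr0 lin f0 addr0.
move=> v; rewrite {2}(matrix_sum_delta v).
have -> : \sum_(i < n + 2) \sum_(j < 1) v i j *: delta_mx i j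
        = \sum_(i < n + 2) v i 0 *: delta_mx i 0.
  by apply: eq_bigr => i _; rewrite big_ord1.
rewrite (big_morph f fD f0).
apply/matrixP => i j; rewrite !mxE summxE; apply: eq_bigr => k _.
by rewrite fZ !mxE (ord1 j) mulrC.
Qed.

Lemma mx_ext (A B : 'M[R]_(n + 2)) :
  (forall v : 'cV[R]_(n + 2), A *m v = B *m v) -> A = B.
Proof.
move=> H; apply/matrixP => i j.
have := H (delta_mx j 0).
move/matrixP => /(_ i 0).
by rewrite -!colE !mxE.
Qed.

Lemma Mvec_lin k z1 z2 a1 a2 b1 b2 :
  Mvec (k *: z1 + z2) (k * a1 + a2) (k * b1 + b2)
  = k *: Mvec z1 a1 b1 + Mvec z2 a2 b2 :> 'cV[R]_(n + 2).
Proof.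
rewrite /Mvec scale_col_mx add_col_mx; congr col_mx.
by apply/matrixP => i j; rewrite !mxE; case: ifP.
Qed.

Lemma zpart_lin k (u v : 'cV[R]_(n + 2)) :
  zpart (k *: u + v) = k *: zpart u + zpart v.
Proof. by rewrite /zpart linearP. Qed.

Lemma xcoord_lin k (u v : 'cV[R]_(n + 2)) :
  xcoord (k *: u + v) = k * xcoord u + xcoord v.
Proof. by rewrite /xcoord linearP !mxE. Qed.

Lemma fcoord_lin k (u v : 'cV[R]_(n + 2)) :
  fcoord (k *: u + v) = k * fcoord u + fcoord v.
Proof. by rewrite /fcoord linearP !mxE. Qed.

Lemma bform_lin phi k (z1 z2 w : 'cV[R]_n) :
  bform phi (k *: z1 + z2) w = k * bform phi z1 w + bform phi z2 w.
Proof.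
by rewrite /bform linearP /= mulmxDl mulmxDl -!scalemxAl !mxE.
Qed.

Lemma E1act_lin (phi : 'M[R]_n) (w : 'cV[R]_n) k (u v : 'cV[R]_(n + 2)) :
  E1act phi w (k *: u + v) = k *: E1act phi w u + E1act phi w v.
Proof.
rewrite /E1act zpart_lin xcoord_lin fcoord_lin bform_lin -Mvec_lin.
congr Mvec.
  by rewrite scalerDl -scalerA scalerBr addrACA opprD.
by ring.
Qed.

Lemma E2act_lin (phi : 'M[R]_n) (w : 'cV[R]_n) k (u v : 'cV[R]_(n + 2)) :
  E2act phi w (k *: u + v) = k *: E2act phi w u + E2act phi w v.
Proof.
rewrite /E2act zpart_lin xcoord_lin fcoord_lin bform_lin -Mvec_lin.
congr Mvec.
  by rewrite scalerDl -scalerA scalerBr addrACA opprD.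
by ring.
Qed.

Lemma perpI2_col (A : 'M[R]_n) (z : 'cV[R]_n) (c : 'cV[R]_2) :
  perpI2 A *m col_mx z c = col_mx (A *m z) c.
Proof. by rewrite /perpI2 mul_block_col !mul0mx addr0 add0r mul1mx. Qed.

Lemma bformE (phis eps : 'M[R]_n) (z w : 'cV[R]_n) :
  bform phis (eps *m z) (eps *m w) = bform (eps^T *m phis *m eps) z w.
Proof. by rewrite /bform trmx_mul !mulmxA. Qed.

Lemma conj_E1 (phi' phis eps : 'M[R]_n) (w : 'cV[R]_n) :
  eps \in unitmx -> phi' = eps^T *m phis *m eps ->
  E1 phi' w = perpI2 (invmx eps) *m E1 phis (eps *m w) *m perpI2 eps.
Proof.
move=> Ue Hphi; apply: mx_ext => v.
rewrite mx_of_lin; last exact: E1act_lin.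
rewrite -!mulmxA mx_of_lin; last exact: E1act_lin.
rewrite -(vsubmxK v) perpI2_col /E1act /zpart /xcoord /fcoord !col_mxKu !col_mxKd.
rewrite /Mvec perpI2_col; congr col_mx.
  by rewrite mulmxBr -scalemxAr !mulKmx.
by rewrite /qform !bformE Hphi.
Qed.
Lemma conj_E2 (phi' phis eps : 'M[R]_n) (w : 'cV[R]_n) :
  eps \in unitmx -> phi' = eps^T *m phis *m eps ->
  E2 phi' w = perpI2 (invmx eps) *m E2 phis (eps *m w) *m perpI2 eps.
Proof.
move=> Ue Hphi; apply: mx_ext => v.
rewrite mx_of_lin; last exact: E2act_lin.
rewrite -!mulmxA mx_of_lin; last exact: E2act_lin.
rewrite -(vsubmxK v) perpI2_col /E2act /zpart /xcoord /fcoord !col_mxKu !col_mxKd.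
rewrite /Mvec perpI2_col; congr col_mx.
  by rewrite mulmxBr -scalemxAr !mulKmx.
by rewrite /qform !bformE Hphi.
Qed.

Lemma conj_inv (P Q g : 'M[R]_(n + 2)) :
  Q *m P = 1%:M -> P *m Q = 1%:M ->
  invmx (Q *m g *m P) = Q *m invmx g *m P.
Proof.
move=> QP PQ; case Ug: (g \in unitmx).
  have key : (Q *m invmx g *m P) *m (Q *m g *m P) = 1%:M.
    rewrite -!mulmxA (mulmxA P Q) PQ mul1mx (mulmxA (invmx g) g).
    by rewrite mulVmx // mul1mx.
  have [_ U] := mulmx1_unit key.
  by rewrite -[LHS]mul1mx -key -(mulmxA _ (Q *m g *m P)) mulmxV // mulmx1.
have NU : Q *m g *m P \notin unitmx by rewrite !unitmx_mul Ug ?andbF ?andFb.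
by rewrite !invmx_out // inE ?Ug.
Qed.

Lemma conjM (P Q a b : 'M[R]_(n + 2)) : P *m Q = 1%:M ->
  (Q *m a *m P) *m (Q *m b *m P) = Q *m (a *m b) *m P.
Proof.
move=> PQ; rewrite -!mulmxA (mulmxA P Q) PQ mul1mx.
by rewrite !mulmxA.
Qed.
End Aux.

Theorem mainTheorem12 (R : comUnitRingType) (n : nat)
  (phi' phis eps : 'M[R]_n) :
  (2 : R) \is a GRing.unit ->
  phi'^T = phi' -> phi' \in unitmx ->
  phis^T = phis -> phis \in unitmx ->
  eps \in unitmx ->
  phi' = eps^T *m phis *m eps ->
  forall g : 'M[R]_(n + 2),
    ETransO phi' g <->
    exists h, ETransO phis h /\ g = perpI2 (invmx eps) *m h *m perpI2 eps.
Proof.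
move=> _ _ _ _ _ Ue Hphi g.
set P := perpI2 eps; set Pi := perpI2 (invmx eps).
have PiP : Pi *m P = 1%:M.
  by rewrite /Pi /P /perpI2 mulmx_block !mulmx0 !mul0mx !addr0 !add0r mulVmx // mul1mx -scalar_mx_block.
have PPi : P *m Pi = 1%:M.
  by rewrite /Pi /P /perpI2 mulmx_block !mulmx0 !mul0mx !addr0 !add0r mulmxV // mul1mx -scalar_mx_block.
have genS : forall s, ETransO_gen phis s -> ETransO_gen phi' (Pi *m s *m P).
  move=> s [w [->|->]]; exists (invmx eps *m w); [left|right];
    by rewrite (@conj_E1 _ _ phi' phis eps, @conj_E2 _ _ phi' phis eps) // mulmxA mulmxV // mul1mx.
have genS' : forall s, ETransO_gen phi' s ->
    exists t, ETransO_gen phis t /\ s = Pi *m t *m P.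
  move=> s [w [->|->]].
    by eexists; split; [exists (eps *m w); left; reflexivity | exact: conj_E1].
  by eexists; split; [exists (eps *m w); right; reflexivity | exact: conj_E2].
split.
  rewrite /ETransO; elim => [|s h Hs _ [h' [Hh' ->]]|s h Hs _ [h' [Hh' ->]]].
  - by exists 1%:M; split; [constructor | rewrite mulmx1 PiP].
  - have [t [Ht ->]] := genS' _ Hs.
    by exists (t *m h'); split; [apply: gen_mul | rewrite conjM].
  - have [t [Ht ->]] := genS' _ Hs.
    by exists (invmx t *m h'); split; [apply: gen_mulV | rewrite conj_inv // conjM].
move=> [h [Hh ->]]; rewrite /ETransO; elim: Hh => [|s h0 Hs _ IH|s h0 Hs _ IH].
- by rewrite mulmx1 PiP; constructor.
- by rewrite -conjM //; apply: gen_mul => //; apply: genS.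
- by rewrite -conjM // -conj_inv //; apply: gen_mulV => //; apply: genS.
Qed.
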